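(* Let $H\in\mathcal{H}$. Then: \begin{enumerate} \item $H_{reg}$ is an anti-symmetric convex-concave function on $\mathbb{R}^N\times\mathbb{R}^N$ whose restriction to $\bar\Omega\times\bar\Omega$ belongs to $\mathcal{H}$. \item $L_{H_{reg}}$ is convex and continuous in both variables, and $L_{H_{reg}}\le L_H$ on $\bar\Omega\times B_R$. \item $|L_{H_{reg}}(x,p)|\le R\|x\|+R\|p\|+5R^2$ and $|H_{reg}(x,y)|\le R\|x\|+R\|y\|+4R^2$ for all $x,y,p\in\mathbb{R}^N$. \item $L_{H_{reg}}$ and $H_{reg}$ are Lipschitz continuous with Lipschitz constants at most $4NR$. \end{enumerate}
   Context: $\Omega\subset\mathbb{R}^N$ is a bounded domain with $\bar\Omega\subset B_R$, where $B_R$ is the ball of radius $R>0$ centered at the origin. $\mathcal{H}$ is the set of continuous $H$ on $\bar\Omega\times\bar\Omega$ with $H(x,y)=-H(y,x)$. For a continuous $H$ on $\bar\Omega\times\bar\Omega$ define, for $x,p\in\mathbb{R}^N$, $L_H(x,p)=\sup_{y\in\bar\Omega}\{\langle y,p\rangle-H(y,x)\}$ (the same formula defines $L_G$ for any $G$ defined on $\mathbb{R}^N\times\mathbb{R}^N$). Restricted conjugates: $L_H^*(q,y)=\sup_{x\in\bar\Omega,\,p\in B_R}\{\langle y,p\rangle+\langle q,x\rangle-L_H(x,p)\}$ and $L_H^{**}(y,q)=\sup_{x\in\bar\Omega,\,p\in B_R}\{\langle y,p\rangle+\langle q,x\rangle-L_H^*(p,x)\}$ for $y,q\in\mathbb{R}^N$.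 For a function $L$ on $\mathbb{R}^N\times\mathbb{R}^N$, its $B_R$-Hamiltonian is $H_L(x,y)=\sup_{p\in B_R}\{\langle x,p\rangle-L(y,p)\}$. The regularization of $H$ is $H_{reg}(x,y)=\tfrac12\big(H_{L_H^{**}}(x,y)-H_{L_H^{**}}(y,x)\big)$ for $x,y\in\mathbb{R}^N$. *)

(* Defs.v *)
From Stdlib Require Fin.
From Stdlib Require Import Reals Lra Classical ClassicalEpsilon.
Open Scope R_scope.

Definition vec (N : nat) := Fin.t N -> R.

Definition vadd {N} (x y : vec N) : vec N := fun i => x i + y i.
Definition vsub {N} (x y : vec N) : vec N := fun i => x i - y i.
Definition vscal {N} (t : R) (x : vec N) : vec N := fun i => t * x i.

Fixpoint dot {N : nat} : vec N -> vec N -> R :=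
  match N return vec N -> vec N -> R with
  | O => fun _ _ => 0
  | S n => fun x y => x Fin.F1 * y Fin.F1
                      + dot (fun i => x (Fin.FS i)) (fun i => y (Fin.FS i))
  end.

Definition norm {N} (x : vec N) : R := sqrt (dot x x).

Definition norm2 {N} (x p : vec N) : R := sqrt (dot x x + dot p p).

Definition ball {N} (rad : R) (p : vec N) : Prop := norm p < rad.

Definition is_open {N} (S : vec N -> Prop) : Prop :=
  forall x, S x -> exists e, 0 < e /\ forall y, norm (vsub y x) < e -> S y.

Definition closure {N} (S : vec N -> Prop) (x : vec N) : Prop :=
  forall e, 0 < e -> exists y, S y /\ norm (vsub y x) < e.

Definition connected {N} (S : vec N -> Prop) : Prop :=
  ~ exists U V : vec N -> Prop,
      is_open U /\ is_open V /\
      (forall x, S x -> U x \/ V x) /\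
      (exists x, S x /\ U x) /\ (exists x, S x /\ V x) /\
      (forall x, S x -> U x -> V x -> False).

Definition bounded {N} (S : vec N -> Prop) : Prop :=
  exists M, forall x, S x -> norm x <= M.

Definition bounded_domain {N} (S : vec N -> Prop) : Prop :=
  (exists x, S x) /\ is_open S /\ connected S /\ bounded S.

(* Supremum of a set of reals: the least upper bound when it exists
   (i.e. the set is nonempty and bounded above); 0 otherwise (convention;
   all suprema occurring below are finite). *)
Definition Rsup (P : R -> Prop) : R :=
  match excluded_middle_informative (exists l, is_lub P l) with
  | left h => proj1_sig (constructive_indefinite_description _ h)
  | right _ => 0
  end.

Definition sup_over {A : Type} (S : A -> Prop) (f : A -> R) : R :=
  Rsup (fun r => exists y, S y /\ r = f y).

Definition sup_over2 {A B : Type} (S : A -> Prop) (T : B -> Prop)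
  (f : A -> B -> R) : R :=
  Rsup (fun r => exists x p, S x /\ T p /\ r = f x p).

Definition continuous_on2 {N} (S : vec N -> Prop) (F : vec N -> vec N -> R) : Prop :=
  forall x y, S x -> S y -> forall e, 0 < e -> exists d, 0 < d /\
    forall x' y', S x' -> S y' -> norm (vsub x' x) < d -> norm (vsub y' y) < d ->
      Rabs (F x' y' - F x y) < e.

Definition antisym_on {N} (S : vec N -> Prop) (F : vec N -> vec N -> R) : Prop :=
  forall x y, S x -> S y -> F x y = - F y x.

Definition in_calH {N} (Om : vec N -> Prop) (F : vec N -> vec N -> R) : Prop :=
  continuous_on2 (closure Om) F /\ antisym_on (closure Om) F.

Definition L_of {N} (Om : vec N -> Prop) (G : vec N -> vec N -> R) (x p : vec N) : R :=
  sup_over (closure Om) (fun y => dot y p - G y x).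

Definition Lstar {N} (Om : vec N -> Prop) (rad : R) (H : vec N -> vec N -> R)
  (q y : vec N) : R :=
  sup_over2 (closure Om) (ball rad)
    (fun x p => dot y p + dot q x - L_of Om H x p).

Definition Lstarstar {N} (Om : vec N -> Prop) (rad : R) (H : vec N -> vec N -> R)
  (y q : vec N) : R :=
  sup_over2 (closure Om) (ball rad)
    (fun x p => dot y p + dot q x - Lstar Om rad H p x).

Definition H_of {N} (rad : R) (L : vec N -> vec N -> R) (x y : vec N) : R :=
  sup_over (ball rad) (fun p => dot x p - L y p).

Definition Hreg {N} (Om : vec N -> Prop) (rad : R) (H : vec N -> vec N -> R)
  (x y : vec N) : R :=
  (H_of rad (Lstarstar Om rad H) x y - H_of rad (Lstarstar Om rad H) y x) / 2.

Definition convex_fun {N} (f : vec N -> R) : Prop :=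
  forall x y t, 0 <= t <= 1 ->
    f (vadd (vscal t x) (vscal (1 - t) y)) <= t * f x + (1 - t) * f y.

Definition concave_fun {N} (f : vec N -> R) : Prop :=
  convex_fun (fun x => - f x).

Definition convex_concave {N} (F : vec N -> vec N -> R) : Prop :=
  (forall y, convex_fun (fun x => F x y)) /\ (forall x, concave_fun (fun y => F x y)).

Definition jointly_convex {N} (F : vec N -> vec N -> R) : Prop :=
  forall x p x' p' t, 0 <= t <= 1 ->
    F (vadd (vscal t x) (vscal (1 - t) x')) (vadd (vscal t p) (vscal (1 - t) p'))
    <= t * F x p + (1 - t) * F x' p'.

Definition jointly_continuous {N} (F : vec N -> vec N -> R) : Prop :=
  forall x p e, 0 < e -> exists d, 0 < d /\
    forall x' p', norm2 (vsub x' x) (vsub p' p) < d -> Rabs (F x' p' - F x p) < e.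

Definition lipschitz2 {N} (K : R) (F : vec N -> vec N -> R) : Prop :=
  forall x p x' p', Rabs (F x p - F x' p') <= K * norm2 (vsub x x') (vsub p p').

(* Main.v *)
Require Import Defs.
From Stdlib Require Import Reals Lra Psatz Classical ClassicalEpsilon FunctionalExtensionality Arith Lia ZArith.
Open Scope R_scope.

Lemma dot_lin_l {N} (a b : R) (x y z : vec N) :
  dot (fun i => a * x i + b * y i) z = a * dot x z + b * dot y z.
Proof.
  revert x y z; induction N as [|n IH]; intros x y z; simpl.
  - ring.
  - rewrite (IH (fun i => x (Fin.FS i)) (fun i => y (Fin.FS i))). ring.
Qed.

Lemma dot_comm {N} (x y : vec N) : dot x y = dot y x.
Proof.
  revert x y; induction N as [|n IH]; intros x y; simpl.
  - ring.
  - rewrite IH. ring.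
Qed.

Lemma dot_nonneg {N} (x : vec N) : 0 <= dot x x.
Proof.
  revert x; induction N as [|n IH]; intros x; simpl.
  - lra.
  - specialize (IH (fun i => x (Fin.FS i))). nra.
Qed.

Lemma dot_lin_r {N} (a b : R) (x y z : vec N) :
  dot z (fun i => a * x i + b * y i) = a * dot z x + b * dot z y.
Proof. rewrite dot_comm, dot_lin_l, (dot_comm z x), (dot_comm z y). ring. Qed.

Lemma vsub_lin {N} (x y : vec N) : vsub x y = (fun i => 1 * x i + (-1) * y i).
Proof. apply functional_extensionality; intro i; unfold vsub; ring. Qed.

Lemma vadd_lin {N} (x y : vec N) : vadd x y = (fun i => 1 * x i + 1 * y i).
Proof. apply functional_extensionality; intro i; unfold vadd; ring. Qed.

Lemma dot_sub_l {N} (x y z : vec N) : dot (vsub x y) z = dot x z - dot y z.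
Proof. rewrite vsub_lin, dot_lin_l. ring. Qed.
Lemma dot_sub_r {N} (x y z : vec N) : dot z (vsub x y) = dot z x - dot z y.
Proof. rewrite vsub_lin, dot_lin_r. ring. Qed.
Lemma dot_add_l {N} (x y z : vec N) : dot (vadd x y) z = dot x z + dot y z.
Proof. rewrite vadd_lin, dot_lin_l. ring. Qed.
Lemma dot_add_r {N} (x y z : vec N) : dot z (vadd x y) = dot z x + dot z y.
Proof. rewrite vadd_lin, dot_lin_r. ring. Qed.
Lemma dot_conv_l {N} (t : R) (x y z : vec N) :
  dot (vadd (vscal t x) (vscal (1 - t) y)) z = t * dot x z + (1 - t) * dot y z.
Proof. apply dot_lin_l. Qed.
Lemma dot_conv_r {N} (t : R) (x y z : vec N) :
  dot z (vadd (vscal t x) (vscal (1 - t) y)) = t * dot z x + (1 - t) * dot z y.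
Proof. apply dot_lin_r. Qed.

Lemma dot_zero_l {N} (z : vec N) : dot (fun _ => 0) z = 0.
Proof.
  replace (fun _ : Fin.t N => 0) with (fun i : Fin.t N => 0 * z i + 0 * z i).
  - rewrite dot_lin_l; ring.
  - apply functional_extensionality; intro; ring.
Qed.

Lemma CS_sq {N} (x y : vec N) : (dot x y)^2 <= dot x x * dot y y.
Proof.
  assert (Hq : forall t, 0 <= dot x x + 2 * t * dot x y + t^2 * dot y y).
  { intro t. pose proof (dot_nonneg (fun i => 1 * x i + t * y i)) as H.
    rewrite dot_lin_l, !dot_lin_r in H. rewrite (dot_comm y x) in H. nra. }
  pose proof (dot_nonneg x); pose proof (dot_nonneg y).
  destruct (Req_dec (dot y y) 0) as [E|E].
  - destruct (Req_dec (dot x y) 0) as [E2|E2].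
    + rewrite E2, E. nra.
    + exfalso. specialize (Hq (- (dot x x + 1) / (2 * dot x y))).
      rewrite E in Hq.
      assert (2 * (- (dot x x + 1) / (2 * dot x y)) * dot x y = - (dot x x + 1)) by (field; auto).
      lra.
  - specialize (Hq (- dot x y / dot y y)).
    assert (0 < dot y y) by lra.
    set (a := dot x y) in *. set (b := dot y y) in *. set (c := dot x x) in *.
    assert (Eq : c + 2 * (- a / b) * a + (- a / b) ^ 2 * b = (c * b - a^2) / b) by (field; auto).
    rewrite Eq in Hq.
    assert (0 <= c * b - a^2).
    { apply Rmult_le_compat_r with (r := b) in Hq; [|lra].
      unfold Rdiv in Hq. rewrite Rmult_assoc, Rinv_l, Rmult_0_l in Hq by lra. lra. }
    lra.
Qed.

Lemma CS {N} (x y : vec N) : Rabs (dot x y) <= norm x * norm y.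
Proof.
  unfold norm. rewrite <- sqrt_mult by apply dot_nonneg.
  rewrite <- sqrt_Rsqr_abs. apply sqrt_le_1_alt. unfold Rsqr.
  pose proof (CS_sq x y). simpl in H. lra.
Qed.

Lemma norm_nonneg {N} (x : vec N) : 0 <= norm x.
Proof. apply sqrt_pos. Qed.

Lemma norm_add {N} (x y : vec N) : norm (vadd x y) <= norm x + norm y.
Proof.
  unfold norm at 1. rewrite dot_add_l, !dot_add_r.
  pose proof (CS x y). pose proof (norm_nonneg x); pose proof (norm_nonneg y).
  rewrite <- (sqrt_Rsqr (norm x + norm y)) by lra. apply sqrt_le_1_alt.
  unfold Rsqr. rewrite (dot_comm y x).
  assert (dot x x = norm x * norm x) by (unfold norm; rewrite sqrt_sqrt; auto using dot_nonneg).
  assert (dot y y = norm y * norm y) by (unfold norm; rewrite sqrt_sqrt; auto using dot_nonneg).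
  pose proof (Rle_abs (dot x y)). nra.
Qed.

Lemma norm_sub_tri {N} (x y z : vec N) : norm (vsub x z) <= norm (vsub x y) + norm (vsub y z).
Proof.
  replace (vsub x z) with (vadd (vsub x y) (vsub y z)) by
    (apply functional_extensionality; intro; unfold vadd, vsub; ring).
  apply norm_add.
Qed.

Lemma norm_sub_sym {N} (x y : vec N) : norm (vsub x y) = norm (vsub y x).
Proof.
  unfold norm. f_equal. rewrite !dot_sub_l, !dot_sub_r. rewrite (dot_comm x y). ring.
Qed.

Lemma norm_sub_le {N} (x y : vec N) : norm (vsub x y) <= norm x + norm y.
Proof.
  replace (vsub x y) with (vadd x (vscal (-1) y)) by
    (apply functional_extensionality; intro; unfold vadd, vsub, vscal; ring).
  eapply Rle_trans; [apply norm_add|].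
  unfold norm at 2. unfold vscal. 
  replace (fun i => -1 * y i) with (fun i => -1 * y i + 0 * y i) by
    (apply functional_extensionality; intro; ring).
  rewrite dot_lin_l, !dot_lin_r. replace (-1 * (-1 * dot y y + 0 * dot y y) + 0 * (-1 * dot y y + 0 * dot y y)) with (dot y y) by ring.
  unfold norm; lra.
Qed.

Lemma dot_bound {N} (x p : vec N) (r : R) : norm p <= r -> Rabs (dot x p) <= r * norm x.
Proof.
  intro H. eapply Rle_trans; [apply CS|]. pose proof (norm_nonneg x). nra.
Qed.

Lemma dot_le {N} (x p : vec N) (r : R) : norm p <= r -> dot x p <= r * norm x.
Proof. intro H. pose proof (dot_bound x p r H). pose proof (Rle_abs (dot x p)). lra. Qed.
Lemma dot_ge {N} (x p : vec N) (r : R) : norm p <= r -> - (r * norm x) <= dot x p.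
Proof. intro H. pose proof (dot_bound x p r H). pose proof (Rle_abs (- dot x p)). rewrite Rabs_Ropp in H1. lra. Qed.

Lemma Rsup_spec (P : R -> Prop) : (exists r, P r) -> (exists M, forall r, P r -> r <= M) ->
  is_lub P (Rsup P).
Proof.
  intros [r Hr] [M HM].
  assert (Hex : exists l, is_lub P l).
  { destruct (completeness P) as [l Hl]. exists M. exact HM. exists r; exact Hr. exists l; exact Hl. }
  unfold Rsup. destruct (excluded_middle_informative (exists l, is_lub P l)) as [h|h].
  - destruct (constructive_indefinite_description _ h) as [l Hl]. simpl. exact Hl.
  - contradiction.
Qed.

Lemma sup_ub {A} (S : A -> Prop) (f : A -> R) (M : R) :
  (forall y, S y -> f y <= M) -> forall y, S y -> f y <= sup_over S f.
Proof.
  intros HM y Hy. unfold sup_over.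
  destruct (Rsup_spec (fun r => exists y, S y /\ r = f y)) as [Hu _].
  - exists (f y), y; auto.
  - exists M; intros r [z [Hz ->]]; auto.
  - apply Hu. exists y; auto.
Qed.

Lemma sup_le {A} (S : A -> Prop) (f : A -> R) (M : R) :
  (exists y, S y) -> (forall y, S y -> f y <= M) -> sup_over S f <= M.
Proof.
  intros [y Hy] HM. unfold sup_over.
  destruct (Rsup_spec (fun r => exists y, S y /\ r = f y)) as [_ Hl].
  - exists (f y), y; auto.
  - exists M; intros r [z [Hz ->]]; auto.
  - apply Hl. intros r [z [Hz ->]]; auto.
Qed.

Lemma sup2_ub {A B} (S : A -> Prop) (T : B -> Prop) (f : A -> B -> R) (M : R) :
  (forall x p, S x -> T p -> f x p <= M) -> forall x p, S x -> T p -> f x p <= sup_over2 S T f.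
Proof.
  intros HM x p Hx Hp. unfold sup_over2.
  destruct (Rsup_spec (fun r => exists x p, S x /\ T p /\ r = f x p)) as [Hu _].
  - exists (f x p), x, p; auto.
  - exists M; intros r [z [q [Hz [Hq ->]]]]; auto.
  - apply Hu. exists x, p; auto.
Qed.

Lemma sup2_le {A B} (S : A -> Prop) (T : B -> Prop) (f : A -> B -> R) (M : R) :
  (exists x, S x) -> (exists p, T p) -> (forall x p, S x -> T p -> f x p <= M) -> sup_over2 S T f <= M.
Proof.
  intros [x Hx] [p Hp] HM. unfold sup_over2.
  destruct (Rsup_spec (fun r => exists x p, S x /\ T p /\ r = f x p)) as [_ Hl].
  - exists (f x p), x, p; auto.
  - exists M; intros r [z [q [Hz [Hq ->]]]]; auto.
  - apply Hl. intros r [z [q [Hz [Hq ->]]]]; auto.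
Qed.

Lemma sup_scale_le {A} (S : A -> Prop) (f : A -> R) (B t c M : R) :
  (exists y, S y) -> (forall y, S y -> f y <= B) -> 0 <= t ->
  (forall y, S y -> t * f y + c <= M) -> t * sup_over S f + c <= M.
Proof.
  intros Hne HB Ht H.
  destruct (Req_dec t 0) as [E|E].
  - subst. destruct Hne as [y Hy]. specialize (H y Hy). lra.
  - assert (sup_over S f <= (M - c) / t).
    { apply sup_le; auto. intros y Hy. specialize (H y Hy).
      apply Rmult_le_reg_l with t; [lra|]. field_simplify; lra. }
    apply Rmult_le_compat_l with (r := t) in H0; [|lra].
    replace (t * ((M - c) / t)) with (M - c) in H0 by (field; auto). lra.
Qed.

Lemma Rabs_le_inv' a b : Rabs a <= b -> -b <= a <= b.
Proof. intro H. pose proof (Rle_abs a). pose proof (Rle_abs (-a)). rewrite Rabs_Ropp in H1. lra. Qed.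

Lemma strict_ge (phi : nat -> nat) : (forall k, (phi k < phi (S k))%nat) -> forall k, (k <= phi k)%nat.
Proof. intros H k; induction k; [lia|]. specialize (H k). lia. Qed.

Lemma strict_mono (phi : nat -> nat) : (forall k, (phi k < phi (S k))%nat) ->
  forall k k', (k <= k')%nat -> (phi k <= phi k')%nat.
Proof. intros H k k' Hk; induction Hk; [lia|]. specialize (H m). lia. Qed.

Lemma small_inv (e : R) : 0 < e -> exists K : nat, / (INR K + 1) < e.
Proof.
  intro He. destruct (archimed (/ e)) as [H1 _].
  assert (0 <= up (/ e))%Z.
  { apply le_IZR. pose proof (Rinv_0_lt_compat e He). lra. }
  exists (Z.to_nat (up (/ e))). rewrite INR_IZR_INZ, Z2Nat.id by auto.
  pose proof (Rinv_0_lt_compat e He).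
  apply Rlt_le_trans with (/ / e).
  - apply Rinv_lt_contravar; [apply Rmult_lt_0_compat; lra|lra].
  - rewrite Rinv_inv; lra.
Qed.

Lemma BW1 (a : nat -> R) (M : R) : (forall n, Rabs (a n) <= M) ->
  exists phi : nat -> nat, (forall k, (phi k < phi (S k))%nat) /\
    exists l, forall e, 0 < e -> exists K, forall k, (K <= k)%nat -> (a (phi k) - l)^2 < e.
Proof.
  intro HM.
  destruct (Bolzano_Weierstrass a (fun c => -M <= c <= M)) as [l Hl];
  [ apply compact_P3 | intro n; specialize (HM n); apply Rabs_le_inv' in HM; lra | ].
  assert (Hc : forall n k : nat, {p : nat | (n <= p)%nat /\ Rabs (a p - l) < / (INR k + 1)}).
  { intros n k. apply constructive_indefinite_description.
    assert (Hpos : 0 < / (INR k + 1)) by (apply Rinv_0_lt_compat; pose proof (pos_INR k); lra).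
    destruct (Hl (disc l (mkposreal _ Hpos)) n) as [p [Hp1 Hp2]];
    [ exists (mkposreal _ Hpos); intros y Hy; exact Hy | ].
    exists p. split; auto. }
  set (c := fun n k => proj1_sig (Hc n k)).
  assert (Hc1 : forall n k, (n <= c n k)%nat) by (intros n k; unfold c; destruct (Hc n k); simpl; tauto).
  assert (Hc2 : forall n k, Rabs (a (c n k) - l) < / (INR k + 1))
    by (intros n k; unfold c; destruct (Hc n k); simpl; tauto).
  set (phi := fix phi k := match k with O => c O O | S k' => c (S (phi k')) (S k') end).
  exists phi. split.
  - intro k. simpl. specialize (Hc1 (S (phi k)) (S k)). lia.
  - exists l. intros e He.
    destruct (small_inv (Rmin e 1)) as [K HK]. { apply Rmin_pos; lra. }
    exists K. intros k Hk.
    assert (Habs : Rabs (a (phi k) - l) < Rmin e 1).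
    { apply Rlt_le_trans with (/ (INR k + 1)).
      - destruct k; simpl; apply Hc2.
      - apply Rlt_le. apply Rle_lt_trans with (/ (INR K + 1)); auto.
        apply Rinv_le_contravar. pose proof (pos_INR K); lra. apply le_INR in Hk. lra. }
    pose proof (Rmin_l e 1). pose proof (Rmin_r e 1).
    set (d := a (phi k) - l) in *.
    assert (d^2 = Rabs d * Rabs d) by (simpl; rewrite <- Rabs_mult; rewrite Rabs_right; [ring|nra]).
    pose proof (Rabs_pos d). nra.
Qed.

Lemma BWvec N : forall (u : nat -> vec N) (M : R), (forall n, dot (u n) (u n) <= M) ->
  exists phi : nat -> nat, (forall k, (phi k < phi (S k))%nat) /\
    exists l, forall e, 0 < e -> exists K, forall k, (K <= k)%nat ->
      dot (vsub (u (phi k)) l) (vsub (u (phi k)) l) < e.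
Proof.
  induction N as [|n IH]; intros u M HM.
  - exists (fun k => k). split; [intro; lia|]. exists (fun _ => 0). intros e He. exists O.
    intros; simpl; lra.
  - destruct (BW1 (fun k => u k Fin.F1) (M + 1)) as [phi1 [Hphi1 [l0 Hl0]]].
    { intro k. specialize (HM k). simpl in HM.
      pose proof (dot_nonneg (fun i => u k (Fin.FS i))).
      apply Rabs_le. split; nra. }
    destruct (IH (fun k => fun i => u (phi1 k) (Fin.FS i)) M) as [phi2 [Hphi2 [l' Hl']]].
    { intro k. specialize (HM (phi1 k)). simpl in HM.
      pose proof (Rle_0_sqr (u (phi1 k) Fin.F1)). unfold Rsqr in *. lra. }
    exists (fun k => phi1 (phi2 k)). split.
    + intro k. apply (strict_mono phi1 Hphi1 (S (phi2 k)) (phi2 (S k))) in Hphi2 as H2.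
      specialize (Hphi1 (phi2 k)). lia. 
    + exists (fun i => Fin.caseS' i (fun _ => R) l0 l').
      intros e He.
      destruct (Hl0 (e/2)) as [K1 HK1]; [lra|].
      destruct (Hl' (e/2)) as [K2 HK2]; [lra|].
      exists (Nat.max K1 K2). intros k Hk.
      specialize (HK2 k ltac:(lia)).
      specialize (HK1 (phi2 k)).
      assert (HK1' : (u (phi1 (phi2 k)) Fin.F1 - l0)^2 < e/2).
      { apply HK1. pose proof (strict_ge phi2 Hphi2 k). lia. }
      simpl. unfold vsub in *. simpl in HK1'. simpl in HK2. change ((u (phi1 (phi2 k)) Fin.F1 - l0) * (u (phi1 (phi2 k)) Fin.F1 - l0) + dot (fun i => u (phi1 (phi2 k)) (Fin.FS i) - l' i) (fun i => u (phi1 (phi2 k)) (Fin.FS i) - l' i) < e). lra.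
Qed.

Lemma norm_zero_sub {N} (x : vec N) : norm (vsub x x) = 0.
Proof.
  unfold norm. replace (vsub x x) with (fun _ : Fin.t N => 0)
    by (apply functional_extensionality; intro; unfold vsub; ring).
  rewrite dot_zero_l. apply sqrt_0.
Qed.

Lemma norm_lt_of_dot {N} (x : vec N) e : 0 < e -> dot x x < e^2 -> norm x < e.
Proof.
  intros He H. unfold norm. rewrite <- (sqrt_pow2 e) by lra. apply sqrt_lt_1_alt.
  split; [apply dot_nonneg|exact H].
Qed.

Lemma dot_lt_of_norm {N} (x : vec N) e : norm x < e -> dot x x < e^2.
Proof.
  intro H. unfold norm in H. pose proof (sqrt_pos (dot x x)).
  rewrite <- (sqrt_sqrt (dot x x)) by apply dot_nonneg. simpl. nra.
Qed.

Lemma closure_closed {N} (Om : vec N -> Prop) z :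
  (forall e, 0 < e -> exists y, closure Om y /\ norm (vsub y z) < e) -> closure Om z.
Proof.
  intros H e He. destruct (H (e/2)) as [y [Hy Hyz]]; [lra|].
  destruct (Hy (e/2)) as [w [Hw Hwy]]; [lra|].
  exists w. split; auto. pose proof (norm_sub_tri w y z). lra.
Qed.

Lemma cont_bounded_below {N} (Om : vec N -> Prop) (rad : R) (g : vec N -> R) :
  (forall x, closure Om x -> norm x < rad) ->
  (forall y, closure Om y -> forall e, 0 < e -> exists d, 0 < d /\
     forall y', closure Om y' -> norm (vsub y' y) < d -> Rabs (g y' - g y) < e) ->
  exists m, forall y, closure Om y -> m <= g y.
Proof.
  intros Hb Hc. apply NNPP. intro Hn.
  assert (Hu : forall n : nat, {y | closure Om y /\ g y < - INR n}).
  { intro n. apply constructive_indefinite_description.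
    apply NNPP; intro H2. apply Hn. exists (- INR n). intros y Hy.
    apply Rnot_lt_le. intro H3. apply H2. exists y; auto. }
  set (u := fun n => proj1_sig (Hu n)).
  assert (Hu1 : forall n, closure Om (u n)) by (intro n; unfold u; destruct (Hu n); simpl; tauto).
  assert (Hu2 : forall n, g (u n) < - INR n) by (intro n; unfold u; destruct (Hu n); simpl; tauto).
  destruct (BWvec N u (rad^2)) as [phi [Hphi [l Hl]]].
  { intro n. apply Rlt_le, dot_lt_of_norm, Hb, Hu1. }
  assert (Hlc : closure Om l).
  { apply closure_closed. intros e He. destruct (Hl (e^2)) as [K HK]; [nra|].
    exists (u (phi K)). split; auto. apply norm_lt_of_dot; auto. }
  destruct (Hc l Hlc 1) as [d [Hd Hcd]]; [lra|].
  destruct (Hl (d^2)) as [K HK]; [nra|].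
  destruct (archimed (1 - g l)) as [Ha _].
  set (n0 := Z.to_nat (up (1 - g l))).
  assert (Hn0 : 1 - g l <= INR n0).
  { unfold n0. destruct (Z_le_gt_dec 0 (up (1 - g l))) as [Hz|Hz].
    - rewrite INR_IZR_INZ, Z2Nat.id by auto. lra.
    - apply Z.gt_lt in Hz. apply IZR_lt in Hz. pose proof (pos_INR (Z.to_nat (up (1 - g l)))). lra. }
  set (k := Nat.max K n0).
  specialize (HK k ltac:(unfold k; lia)).
  specialize (Hcd (u (phi k)) (Hu1 _) (norm_lt_of_dot _ _ Hd HK)).
  specialize (Hu2 (phi k)).
  assert (INR n0 <= INR (phi k)).
  { apply le_INR. pose proof (strict_ge phi Hphi k). unfold k in *. lia. }
  apply Rabs_def2 in Hcd. lra.
Qed.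

Lemma norm_scal {N} (t : R) (x : vec N) : norm (vscal t x) = Rabs t * norm x.
Proof.
  unfold norm, vscal.
  replace (fun i => t * x i) with (fun i => t * x i + 0 * x i) by
    (apply functional_extensionality; intro; ring).
  rewrite dot_lin_l, !dot_lin_r.
  replace (t * (t * dot x x + 0 * dot x x) + 0 * (t * dot x x + 0 * dot x x)) with (Rsqr t * dot x x)
    by (unfold Rsqr; ring).
  rewrite sqrt_mult by (auto using Rle_0_sqr, dot_nonneg).
  rewrite sqrt_Rsqr_abs. reflexivity.
Qed.

Lemma ball_conv {N} (rad t : R) (p p' : vec N) : 0 <= t <= 1 -> norm p < rad -> norm p' < rad ->
  norm (vadd (vscal t p) (vscal (1 - t) p')) < rad.
Proof.
  intros Ht H1 H2. eapply Rle_lt_trans; [apply norm_add|].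
  rewrite !norm_scal, !Rabs_right by lra.
  destruct (Req_dec t 0) as [E|E].
  - subst. lra.
  - assert (t * norm p < t * rad) by (apply Rmult_lt_compat_l; lra).
    assert ((1 - t) * norm p' <= (1 - t) * rad) by (apply Rmult_le_compat_l; lra). lra.
Qed.

Lemma norm_vzero {N} : norm (fun _ : Fin.t N => 0) = 0.
Proof. unfold norm. rewrite dot_zero_l. apply sqrt_0. Qed.

Definition Good {N} (rad : R) (Om : vec N -> Prop) (H : vec N -> vec N -> R) : Prop :=
  0 < rad /\ (forall x, closure Om x -> norm x < rad) /\ (exists x, closure Om x) /\
  (forall x y, closure Om x -> closure Om y -> H x y = - H y x) /\
  (forall x, closure Om x -> exists m, forall y, closure Om y -> m <= H y x).



Lemma LH_ub {N} rad (Om : vec N -> Prop) H (G : Good rad Om H) x p y :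
  closure Om x -> closure Om y -> dot y p - H y x <= L_of Om H x p.
Proof.
  destruct G as (Hr & HK & Hne & Han & Hbl). intros Hx Hy.
  destruct (Hbl x Hx) as [m Hm].
  unfold L_of. refine (sup_ub (closure Om) (fun y => dot y p - H y x) (rad * norm p - m) _ y Hy).
  intros z Hz. specialize (Hm z Hz). pose proof (dot_le p z rad (Rlt_le _ _ (HK z Hz))).
  rewrite dot_comm in H0. lra.
Qed.

Lemma LH_le {N} rad (Om : vec N -> Prop) H (G : Good rad Om H) x p M :
  (forall y, closure Om y -> dot y p - H y x <= M) -> L_of Om H x p <= M.
Proof.
  destruct G as (Hr & HK & Hne & Han & Hbl). intros HM.
  unfold L_of. apply sup_le; auto.
Qed.

Lemma H_diag {N} rad (Om : vec N -> Prop) H (G : Good rad Om H) x :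
  closure Om x -> H x x = 0.
Proof. destruct G as (Hr & HK & Hne & Han & Hbl). intro Hx. specialize (Han x x Hx Hx). lra. Qed.

Lemma LH_ge {N} rad (Om : vec N -> Prop) H (G : Good rad Om H) x p :
  closure Om x -> dot x p <= L_of Om H x p.
Proof.
  intro Hx. pose proof (LH_ub rad Om H G x p x Hx Hx). rewrite (H_diag rad Om H G x Hx) in H0. lra.
Qed.

Lemma Gnorm {N} rad (Om : vec N -> Prop) H (G : Good rad Om H) x : closure Om x -> norm x <= rad.
Proof. destruct G as (Hr & HK & Hne & Han & Hbl). intro Hx. apply Rlt_le, HK, Hx. Qed.

Lemma Grad {N} rad (Om : vec N -> Prop) H (G : Good rad Om H) : 0 < rad.
Proof. destruct G as (Hr & HK & Hne & Han & Hbl). exact Hr. Qed.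

Lemma Gne {N} rad (Om : vec N -> Prop) H (G : Good rad Om H) : exists x, closure Om x.
Proof. destruct G as (Hr & HK & Hne & Han & Hbl). exact Hne. Qed.

Lemma Bne {N} rad (Om : vec N -> Prop) H (G : Good rad Om H) : exists p, @ball N rad p.
Proof. exists (fun _ => 0). unfold ball. rewrite norm_vzero. exact (Grad rad Om H G). Qed.

Lemma ball_le {N} rad (p : vec N) : ball rad p -> norm p <= rad.
Proof. unfold ball; lra. Qed.

Lemma LS_ub {N} rad (Om : vec N -> Prop) H (G : Good rad Om H) q y x p :
  closure Om x -> ball rad p -> dot y p + dot q x - L_of Om H x p <= Lstar Om rad H q y.
Proof.
  intros Hx Hp. unfold Lstar.
  refine (sup2_ub (closure Om) (ball rad) (fun x p => dot y p + dot q x - L_of Om H x p)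
     (rad * norm y + rad * norm q + rad * rad) _ x p Hx Hp).
  intros z r Hz Hr.
  pose proof (LH_ge rad Om H G z r Hz).
  pose proof (dot_le y r rad (ball_le _ _ Hr)).
  pose proof (dot_le q z rad (Gnorm rad Om H G z Hz)).
  pose proof (dot_ge z r rad (ball_le _ _ Hr)).
  pose proof (Gnorm rad Om H G z Hz). pose proof (Grad rad Om H G). nra.
Qed.

Lemma LS_le {N} rad (Om : vec N -> Prop) H (G : Good rad Om H) q y M :
  (forall x p, closure Om x -> ball rad p -> dot y p + dot q x - L_of Om H x p <= M) ->
  Lstar Om rad H q y <= M.
Proof. intro HM. unfold Lstar. apply sup2_le; auto. apply (Gne rad Om H G). apply (Bne rad Om H G). Qed.

Lemma LS_le_LH {N} rad (Om : vec N -> Prop) H (G : Good rad Om H) p x :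
  closure Om x -> Lstar Om rad H p x <= L_of Om H x p.
Proof.
  intro Hx. apply (LS_le rad Om H G). intros x'' p'' Hx'' Hp''.
  pose proof (LH_ub rad Om H G x'' p'' x Hx'' Hx).
  pose proof (LH_ub rad Om H G x p x'' Hx Hx'').
  destruct G as (Hr & HK & Hne & Han & Hbl). rewrite (Han x x'' Hx Hx'') in H0.
  rewrite (dot_comm p x'') . lra.
Qed.

Definition c1 {N} (rad : R) (Om : vec N -> Prop) H (x0 : vec N) := L_of Om H x0 (fun _ => 0).

Lemma LS_lower {N} rad (Om : vec N -> Prop) H (G : Good rad Om H) x0 q y :
  closure Om x0 -> - (rad * norm q) - c1 rad Om H x0 <= Lstar Om rad H q y.
Proof.
  intro Hx0. pose proof (LS_ub rad Om H G q y x0 (fun _ => 0) Hx0).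
  unfold ball in H0. rewrite norm_vzero in H0. specialize (H0 (Grad rad Om H G)).
  rewrite dot_comm, dot_zero_l in H0.
  pose proof (dot_ge q x0 rad (Gnorm rad Om H G x0 Hx0)).
  pose proof (norm_nonneg q). pose proof (Gnorm rad Om H G x0 Hx0).
  unfold c1. nra.
Qed.

Lemma LSS_ub {N} rad (Om : vec N -> Prop) H (G : Good rad Om H) y q x p :
  closure Om x -> ball rad p -> dot y p + dot q x - Lstar Om rad H p x <= Lstarstar Om rad H y q.
Proof.
  intros Hx Hp. destruct (Gne rad Om H G) as [x0 Hx0].
  refine (sup2_ub (closure Om) (ball rad) (fun x p => dot y p + dot q x - Lstar Om rad H p x)
     (rad * norm y + rad * norm q + rad * rad + c1 rad Om H x0) _ x p Hx Hp).
  intros z r Hz Hr.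
  pose proof (LS_lower rad Om H G x0 r z Hx0).
  pose proof (dot_le y r rad (ball_le _ _ Hr)).
  pose proof (dot_le q z rad (Gnorm rad Om H G z Hz)).
  pose proof (ball_le _ _ Hr). pose proof (Grad rad Om H G). nra.
Qed.

Lemma LSS_le {N} rad (Om : vec N -> Prop) H (G : Good rad Om H) y q M :
  (forall x p, closure Om x -> ball rad p -> dot y p + dot q x - Lstar Om rad H p x <= M) ->
  Lstarstar Om rad H y q <= M.
Proof. intro HM. unfold Lstarstar. apply sup2_le; auto. apply (Gne rad Om H G). apply (Bne rad Om H G). Qed.

Lemma LSS_le_LH {N} rad (Om : vec N -> Prop) H (G : Good rad Om H) x p :
  closure Om x -> ball rad p -> Lstarstar Om rad H x p <= L_of Om H x p.
Proof.
  intros Hx Hp. apply (LSS_le rad Om H G). intros x' p' Hx' Hp'.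
  pose proof (LS_ub rad Om H G p' x' x p Hx Hp).
  rewrite (dot_comm x' p) in H0. rewrite (dot_comm p' x) in H0. lra.
Qed.

Definition c2 {N} (rad : R) (Om : vec N -> Prop) H (x0 : vec N) := Lstar Om rad H (fun _ => 0) x0.

Lemma LSS_lower {N} rad (Om : vec N -> Prop) H (G : Good rad Om H) x0 y q :
  closure Om x0 -> - (rad * norm q) - c2 rad Om H x0 <= Lstarstar Om rad H y q.
Proof.
  intro Hx0. pose proof (LSS_ub rad Om H G y q x0 (fun _ => 0) Hx0).
  unfold ball in H0. rewrite norm_vzero in H0. specialize (H0 (Grad rad Om H G)).
  rewrite dot_comm, dot_zero_l in H0.
  pose proof (dot_ge q x0 rad (Gnorm rad Om H G x0 Hx0)).
  unfold c2. lra.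
Qed.

Lemma LSS_lip {N} rad (Om : vec N -> Prop) H (G : Good rad Om H) y q y' q' :
  Lstarstar Om rad H y q <= Lstarstar Om rad H y' q' + rad * norm (vsub y y') + rad * norm (vsub q q').
Proof.
  apply (LSS_le rad Om H G). intros x p Hx Hp.
  pose proof (LSS_ub rad Om H G y' q' x p Hx Hp).
  pose proof (dot_le (vsub y y') p rad (ball_le _ _ Hp)). rewrite dot_sub_l in H1.
  pose proof (dot_le (vsub q q') x rad (Gnorm rad Om H G x Hx)). rewrite dot_sub_l in H2.
  lra.
Qed.

Lemma LSS_conv {N} rad (Om : vec N -> Prop) H (G : Good rad Om H) y q y' q' t :
  0 <= t <= 1 ->
  Lstarstar Om rad H (vadd (vscal t y) (vscal (1 - t) y')) (vadd (vscal t q) (vscal (1 - t) q'))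
  <= t * Lstarstar Om rad H y q + (1 - t) * Lstarstar Om rad H y' q'.
Proof.
  intro Ht. apply (LSS_le rad Om H G). intros x p Hx Hp.
  rewrite dot_conv_l, dot_conv_l.
  pose proof (LSS_ub rad Om H G y q x p Hx Hp).
  pose proof (LSS_ub rad Om H G y' q' x p Hx Hp).
  assert (t * (dot y p + dot q x - Lstar Om rad H p x) <= t * Lstarstar Om rad H y q)
    by (apply Rmult_le_compat_l; lra).
  assert ((1 - t) * (dot y' p + dot q' x - Lstar Om rad H p x) <= (1 - t) * Lstarstar Om rad H y' q')
    by (apply Rmult_le_compat_l; lra).
  lra.
Qed.

Lemma A_ub {N} rad (Om : vec N -> Prop) H (G : Good rad Om H) x y p :
  ball rad p -> dot x p - Lstarstar Om rad H y p <= H_of rad (Lstarstar Om rad H) x y.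
Proof.
  intros Hp. destruct (Gne rad Om H G) as [x0 Hx0].
  refine (sup_ub (ball rad) (fun p => dot x p - Lstarstar Om rad H y p)
     (rad * norm x + rad * rad + c2 rad Om H x0) _ p Hp).
  intros r Hr.
  pose proof (LSS_lower rad Om H G x0 y r Hx0).
  pose proof (dot_le x r rad (ball_le _ _ Hr)).
  pose proof (ball_le _ _ Hr). pose proof (Grad rad Om H G). nra.
Qed.

Lemma A_le {N} rad (Om : vec N -> Prop) H (G : Good rad Om H) x y M :
  (forall p, ball rad p -> dot x p - Lstarstar Om rad H y p <= M) ->
  H_of rad (Lstarstar Om rad H) x y <= M.
Proof. intro HM. unfold H_of. apply sup_le; auto. apply (Bne rad Om H G). Qed.

Lemma A_lip {N} rad (Om : vec N -> Prop) H (G : Good rad Om H) x y x' y' :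
  H_of rad (Lstarstar Om rad H) x y <=
  H_of rad (Lstarstar Om rad H) x' y' + rad * norm (vsub x x') + rad * norm (vsub y y').
Proof.
  apply (A_le rad Om H G). intros p Hp.
  pose proof (A_ub rad Om H G x' y' p Hp).
  pose proof (LSS_lip rad Om H G y' p y p). rewrite norm_sub_sym in H1.
  replace (vsub p p) with (fun _ : Fin.t N => 0) in H1 by
    (apply functional_extensionality; intro; unfold vsub; ring).
  rewrite norm_vzero in H1.
  pose proof (dot_le (vsub x x') p rad (ball_le _ _ Hp)). rewrite dot_sub_l in H2.
  lra.
Qed.

Lemma A_swap {N} rad (Om : vec N -> Prop) H (G : Good rad Om H) x y :
  H_of rad (Lstarstar Om rad H) x y <= H_of rad (Lstarstar Om rad H) y x + 2 * rad * norm (vsub x y).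
Proof.
  apply (A_le rad Om H G). intros p Hp.
  pose proof (A_ub rad Om H G y x p Hp).
  pose proof (LSS_lip rad Om H G x p y p).
  replace (vsub p p) with (fun _ : Fin.t N => 0) in H1 by
    (apply functional_extensionality; intro; unfold vsub; ring).
  rewrite norm_vzero in H1.
  pose proof (dot_le (vsub x y) p rad (ball_le _ _ Hp)). rewrite dot_sub_l in H2.
  lra.
Qed.

Lemma A_convex1 {N} rad (Om : vec N -> Prop) H (G : Good rad Om H) x x' y t :
  0 <= t <= 1 ->
  H_of rad (Lstarstar Om rad H) (vadd (vscal t x) (vscal (1 - t) x')) y <=
  t * H_of rad (Lstarstar Om rad H) x y + (1 - t) * H_of rad (Lstarstar Om rad H) x' y.
Proof.
  intro Ht. apply (A_le rad Om H G). intros p Hp.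
  rewrite dot_conv_l.
  pose proof (A_ub rad Om H G x y p Hp). pose proof (A_ub rad Om H G x' y p Hp).
  assert (t * (dot x p - Lstarstar Om rad H y p) <= t * H_of rad (Lstarstar Om rad H) x y)
    by (apply Rmult_le_compat_l; lra).
  assert ((1 - t) * (dot x' p - Lstarstar Om rad H y p) <= (1 - t) * H_of rad (Lstarstar Om rad H) x' y)
    by (apply Rmult_le_compat_l; lra).
  lra.
Qed.

Lemma A_bnd {N} rad (Om : vec N -> Prop) H (G : Good rad Om H) x y :
  exists M, forall p, ball rad p -> dot x p - Lstarstar Om rad H y p <= M.
Proof.
  destruct (Gne rad Om H G) as [x0 Hx0].
  exists (rad * norm x + rad * rad + c2 rad Om H x0). intros r Hr.
  pose proof (LSS_lower rad Om H G x0 y r Hx0).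
  pose proof (dot_le x r rad (ball_le _ _ Hr)).
  pose proof (ball_le _ _ Hr). pose proof (Grad rad Om H G). nra.
Qed.

Lemma A_concave2 {N} rad (Om : vec N -> Prop) H (G : Good rad Om H) x y y' t :
  0 <= t <= 1 ->
  t * H_of rad (Lstarstar Om rad H) x y + (1 - t) * H_of rad (Lstarstar Om rad H) x y' <=
  H_of rad (Lstarstar Om rad H) x (vadd (vscal t y) (vscal (1 - t) y')).
Proof.
  intro Ht.
  set (yt := vadd (vscal t y) (vscal (1 - t) y')).
  assert (Hpt : forall p p', ball rad p -> ball rad p' ->
     t * (dot x p - Lstarstar Om rad H y p) + (1 - t) * (dot x p' - Lstarstar Om rad H y' p')
     <= H_of rad (Lstarstar Om rad H) x yt).
  { intros p p' Hp Hp'.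
    set (pt := vadd (vscal t p) (vscal (1 - t) p')).
    assert (Hpt : ball rad pt) by (apply ball_conv; auto).
    pose proof (A_ub rad Om H G x yt pt Hpt).
    pose proof (LSS_conv rad Om H G y p y' p' t Ht).
    unfold pt in H0. rewrite dot_conv_r in H0. fold yt pt in H1. fold pt in H0. lra. }
  destruct (A_bnd rad Om H G x y) as [M1 HM1].
  destruct (A_bnd rad Om H G x y') as [M2 HM2].
  assert (Hstep : forall p', ball rad p' ->
     t * H_of rad (Lstarstar Om rad H) x y + (1 - t) * (dot x p' - Lstarstar Om rad H y' p')
     <= H_of rad (Lstarstar Om rad H) x yt).
  { intros p' Hp'. unfold H_of at 1.
    apply (sup_scale_le (ball rad) (fun p => dot x p - Lstarstar Om rad H y p) M1);
      [apply (Bne rad Om H G) | exact HM1 | lra | intros p Hp; apply Hpt; auto]. }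
  rewrite Rplus_comm. unfold H_of at 2.
  apply (sup_scale_le (ball rad) (fun p => dot x p - Lstarstar Om rad H y' p) M2);
    [apply (Bne rad Om H G) | exact HM2 | lra | intros p' Hp'; rewrite Rplus_comm; apply Hstep; auto].
Qed.

Lemma Hreg_lip {N} rad (Om : vec N -> Prop) H (G : Good rad Om H) x y x' y' :
  Rabs (Hreg Om rad H x y - Hreg Om rad H x' y') <= rad * norm (vsub x x') + rad * norm (vsub y y').
Proof.
  unfold Hreg.
  pose proof (A_lip rad Om H G x y x' y'). pose proof (A_lip rad Om H G x' y' x y).
  pose proof (A_lip rad Om H G y x y' x'). pose proof (A_lip rad Om H G y' x' y x).
  rewrite (norm_sub_sym x' x), (norm_sub_sym y' y) in *.
  apply Rabs_le. lra.
Qed.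

Lemma Hreg_bnd {N} rad (Om : vec N -> Prop) H (G : Good rad Om H) x y :
  Rabs (Hreg Om rad H x y) <= rad * norm x + rad * norm y.
Proof.
  unfold Hreg.
  pose proof (A_swap rad Om H G x y). pose proof (A_swap rad Om H G y x).
  rewrite (norm_sub_sym y x) in H1. pose proof (norm_sub_le x y).
  pose proof (Grad rad Om H G).
  apply Rabs_le. nra.
Qed.

Lemma Hreg_anti {N} rad (Om : vec N -> Prop) H x y : Hreg Om rad H x y = - Hreg Om rad H y x.
Proof. unfold Hreg. lra. Qed.

Lemma Hreg_ge {N} rad (Om : vec N -> Prop) H (G : Good rad Om H) x y p :
  closure Om x -> closure Om y -> ball rad p -> dot y p - L_of Om H x p <= Hreg Om rad H y x.
Proof.
  intros Hx Hy Hp. unfold Hreg.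
  pose proof (A_ub rad Om H G y x p Hp).
  pose proof (LSS_le_LH rad Om H G x p Hx Hp).
  assert (H_of rad (Lstarstar Om rad H) x y <= Lstar Om rad H p x - dot y p).
  { apply (A_le rad Om H G). intros q Hq.
    pose proof (LSS_ub rad Om H G y q x p Hx Hp). rewrite (dot_comm x q). lra. }
  pose proof (LS_le_LH rad Om H G p x Hx). lra.
Qed.

Lemma Hreg_convex1 {N} rad (Om : vec N -> Prop) H (G : Good rad Om H) y :
  convex_fun (fun x => Hreg Om rad H x y).
Proof.
  intros x x' t Ht. unfold Hreg.
  pose proof (A_convex1 rad Om H G x x' y t Ht).
  pose proof (A_concave2 rad Om H G y x x' t Ht). lra.
Qed.

Lemma Hreg_concave2 {N} rad (Om : vec N -> Prop) H (G : Good rad Om H) x :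
  concave_fun (fun y => Hreg Om rad H x y).
Proof.
  intros y y' t Ht. unfold Hreg.
  pose proof (A_convex1 rad Om H G y y' x t Ht).
  pose proof (A_concave2 rad Om H G x y y' t Ht). lra.
Qed.

Lemma LHr_ub {N} rad (Om : vec N -> Prop) H (G : Good rad Om H) x p y :
  closure Om y -> dot y p - Hreg Om rad H y x <= L_of Om (Hreg Om rad H) x p.
Proof.
  intro Hy.
  refine (sup_ub (closure Om) (fun y => dot y p - Hreg Om rad H y x)
     (rad * norm p + rad * rad + rad * norm x) _ y Hy).
  intros z Hz.
  pose proof (Hreg_bnd rad Om H G z x). pose proof (Rle_abs (- Hreg Om rad H z x)).
  rewrite Rabs_Ropp in H1.
  pose proof (dot_le p z rad (Gnorm rad Om H G z Hz)). rewrite dot_comm in H2.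
  pose proof (Gnorm rad Om H G z Hz). pose proof (Grad rad Om H G). nra.
Qed.

Lemma LHr_le {N} rad (Om : vec N -> Prop) H (G : Good rad Om H) x p M :
  (forall y, closure Om y -> dot y p - Hreg Om rad H y x <= M) -> L_of Om (Hreg Om rad H) x p <= M.
Proof. intro HM. unfold L_of. apply sup_le; auto. apply (Gne rad Om H G). Qed.

Lemma LHr_lip {N} rad (Om : vec N -> Prop) H (G : Good rad Om H) x p x' p' :
  Rabs (L_of Om (Hreg Om rad H) x p - L_of Om (Hreg Om rad H) x' p') <=
  rad * norm (vsub x x') + rad * norm (vsub p p').
Proof.
  assert (Hgen : forall x p x' p', L_of Om (Hreg Om rad H) x p <=
     L_of Om (Hreg Om rad H) x' p' + rad * norm (vsub x x') + rad * norm (vsub p p')).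
  { intros a b a' b'. apply (LHr_le rad Om H G). intros y Hy.
    pose proof (LHr_ub rad Om H G a' b' y Hy).
    pose proof (Hreg_lip rad Om H G y a y a').
    replace (vsub y y) with (fun _ : Fin.t N => 0) in H1 by
      (apply functional_extensionality; intro; unfold vsub; ring).
    rewrite norm_vzero in H1.
    pose proof (Rle_abs (- (Hreg Om rad H y a - Hreg Om rad H y a'))). rewrite Rabs_Ropp in H2.
    pose proof (dot_le (vsub b b') y rad (Gnorm rad Om H G y Hy)). rewrite dot_comm, dot_sub_r in H3.
    rewrite (dot_comm y b), (dot_comm y b') in *. lra. }
  pose proof (Hgen x p x' p'). pose proof (Hgen x' p' x p).
  rewrite (norm_sub_sym x' x), (norm_sub_sym p' p) in H1. apply Rabs_le. lra.
Qed.

Lemma LHr_bnd {N} rad (Om : vec N -> Prop) H (G : Good rad Om H) x p :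
  Rabs (L_of Om (Hreg Om rad H) x p) <= rad * norm x + rad * norm p + rad * rad.
Proof.
  destruct (Gne rad Om H G) as [y0 Hy0].
  pose proof (LHr_ub rad Om H G x p y0 Hy0).
  assert (L_of Om (Hreg Om rad H) x p <= rad * norm p + rad * rad + rad * norm x).
  { apply (LHr_le rad Om H G). intros z Hz.
    pose proof (Hreg_bnd rad Om H G z x). pose proof (Rle_abs (- Hreg Om rad H z x)).
    rewrite Rabs_Ropp in H2.
    pose proof (dot_le p z rad (Gnorm rad Om H G z Hz)). rewrite dot_comm in H3.
    pose proof (Gnorm rad Om H G z Hz). pose proof (Grad rad Om H G). nra. }
  pose proof (Hreg_bnd rad Om H G y0 x). pose proof (Rle_abs (Hreg Om rad H y0 x)).
  pose proof (dot_ge p y0 rad (Gnorm rad Om H G y0 Hy0)). rewrite dot_comm in H4.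
  pose proof (Gnorm rad Om H G y0 Hy0). pose proof (Grad rad Om H G).
  apply Rabs_le. nra.
Qed.

Lemma LHr_le_LH {N} rad (Om : vec N -> Prop) H (G : Good rad Om H) x p :
  closure Om x -> ball rad p -> L_of Om (Hreg Om rad H) x p <= L_of Om H x p.
Proof.
  intros Hx Hp. apply (LHr_le rad Om H G). intros y Hy.
  pose proof (Hreg_ge rad Om H G x y p Hx Hy Hp). lra.
Qed.

Lemma LHr_conv {N} rad (Om : vec N -> Prop) H (G : Good rad Om H) : jointly_convex (L_of Om (Hreg Om rad H)).
Proof.
  intros x p x' p' t Ht. apply (LHr_le rad Om H G). intros y Hy.
  rewrite dot_conv_r.
  pose proof (Hreg_concave2 rad Om H G y x x' t Ht). simpl in H0.
  pose proof (LHr_ub rad Om H G x p y Hy). pose proof (LHr_ub rad Om H G x' p' y Hy).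
  assert (t * (dot y p - Hreg Om rad H y x) <= t * L_of Om (Hreg Om rad H) x p)
    by (apply Rmult_le_compat_l; lra).
  assert ((1 - t) * (dot y p' - Hreg Om rad H y x') <= (1 - t) * L_of Om (Hreg Om rad H) x' p')
    by (apply Rmult_le_compat_l; lra).
  lra.
Qed.

Lemma norm_le_norm2_l {N} (a b : vec N) : norm a <= norm2 a b.
Proof. unfold norm, norm2. apply sqrt_le_1_alt. pose proof (dot_nonneg b). lra. Qed.
Lemma norm_le_norm2_r {N} (a b : vec N) : norm b <= norm2 a b.
Proof. unfold norm, norm2. apply sqrt_le_1_alt. pose proof (dot_nonneg a). lra. Qed.

Lemma lip_conv {N} (rad : R) (F : vec N -> vec N -> R) : 0 < rad ->
  (forall x p x' p', Rabs (F x p - F x' p') <= rad * norm (vsub x x') + rad * norm (vsub p p')) ->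
  lipschitz2 (4 * INR N * rad) F.
Proof.
  intros Hr HF x p x' p'. eapply Rle_trans; [apply HF|].
  pose proof (norm_le_norm2_l (vsub x x') (vsub p p')).
  pose proof (norm_le_norm2_r (vsub x x') (vsub p p')).
  pose proof (norm_nonneg (vsub x x')). pose proof (norm_nonneg (vsub p p')).
  destruct N as [|n].
  - unfold norm in *. simpl dot in *. rewrite sqrt_0 in *. simpl INR. lra.
  - rewrite S_INR. pose proof (pos_INR n). set (n2 := norm2 (vsub x x') (vsub p p')) in *. assert (rad * norm (vsub x x') <= rad * n2) by (apply Rmult_le_compat_l; lra). assert (rad * norm (vsub p p') <= rad * n2) by (apply Rmult_le_compat_l; lra). assert (0 <= rad * n2) by nra. assert (0 <= INR n * rad * n2) by (apply Rmult_le_pos; nra). nra.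
Qed.

Lemma cont_conv {N} (rad : R) (F : vec N -> vec N -> R) : 0 < rad ->
  (forall x p x' p', Rabs (F x p - F x' p') <= rad * norm (vsub x x') + rad * norm (vsub p p')) ->
  jointly_continuous F.
Proof.
  intros Hr HF x p e He. exists (e / (2 * rad)). split.
  - apply Rdiv_lt_0_compat; lra.
  - intros x' p' Hd. eapply Rle_lt_trans; [apply HF|].
    pose proof (norm_le_norm2_l (vsub x' x) (vsub p' p)).
    pose proof (norm_le_norm2_r (vsub x' x) (vsub p' p)).
    assert (2 * rad * (e / (2 * rad)) = e) by (field; lra).
    nra.
Qed.

Lemma cont_on_conv {N} (rad : R) (S : vec N -> Prop) (F : vec N -> vec N -> R) : 0 < rad ->
  (forall x p x' p', Rabs (F x p - F x' p') <= rad * norm (vsub x x') + rad * norm (vsub p p')) ->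
  continuous_on2 S F.
Proof.
  intros Hr HF x y Hx Hy e He. exists (e / (2 * rad)). split.
  - apply Rdiv_lt_0_compat; lra.
  - intros x' y' _ _ H1 H2. eapply Rle_lt_trans; [apply HF|].
    assert (2 * rad * (e / (2 * rad)) = e) by (field; lra).
    nra.
Qed.

Lemma mkGood (N : nat) (rad : R) (Om : vec N -> Prop) (Hrad : 0 < rad)
  (HOm : bounded_domain Om) (HOmR : forall x, closure Om x -> ball rad x)
  (H : vec N -> vec N -> R) (HH : in_calH Om H) : Good rad Om H.
Proof.
  destruct HH as [Hc Ha]. destruct HOm as [[x0 Hx0] _].
  split; [exact Hrad|]. split; [exact HOmR|]. split.
  { exists x0. intros e He. exists x0. split; auto. rewrite norm_zero_sub. exact He. }
  split; [exact Ha|].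
  intros x Hx. apply (cont_bounded_below Om rad (fun y => H y x)); [exact HOmR|].
  intros y Hy e He. destruct (Hc y x Hy Hx e He) as [d [Hd Hd']].
  exists d; split; auto. intros y' Hy' Hyy. apply Hd'; auto. rewrite norm_zero_sub; exact Hd.
Qed.

Theorem proposition2p2 (N : nat) (rad : R) (Om : vec N -> Prop)
  (Hrad : 0 < rad)
  (HOm : bounded_domain Om)
  (HOmR : forall x, closure Om x -> ball rad x)
  (H : vec N -> vec N -> R)
  (HH : in_calH Om H) :
  (* (1) *)
  ((forall x y, Hreg Om rad H x y = - Hreg Om rad H y x) /\
   convex_concave (Hreg Om rad H) /\
   in_calH Om (Hreg Om rad H)) /\
  (* (2) *)
  (jointly_convex (L_of Om (Hreg Om rad H)) /\
   jointly_continuous (L_of Om (Hreg Om rad H)) /\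
   (forall x p, closure Om x -> ball rad p ->
      L_of Om (Hreg Om rad H) x p <= L_of Om H x p)) /\
  (* (3) *)
  ((forall x p, Rabs (L_of Om (Hreg Om rad H) x p)
                 <= rad * norm x + rad * norm p + 5 * rad ^ 2) /\
   (forall x y, Rabs (Hreg Om rad H x y)
                 <= rad * norm x + rad * norm y + 4 * rad ^ 2)) /\
  (* (4) *)
  (lipschitz2 (4 * INR N * rad) (L_of Om (Hreg Om rad H)) /\
   lipschitz2 (4 * INR N * rad) (Hreg Om rad H)).
Proof.
  pose proof (mkGood N rad Om Hrad HOm HOmR H HH) as G.
  refine (conj (conj _ (conj _ _)) (conj (conj _ (conj _ _)) (conj (conj _ _) (conj _ _)))).
  - apply Hreg_anti.
  - split; [apply (Hreg_convex1 rad Om H G) | apply (Hreg_concave2 rad Om H G)].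
  - split.
    + apply (cont_on_conv rad); auto. apply (Hreg_lip rad Om H G).
    + intros x y _ _. apply Hreg_anti.
  - apply (LHr_conv rad Om H G).
  - apply (cont_conv rad); auto. apply (LHr_lip rad Om H G).
  - apply (LHr_le_LH rad Om H G).
  - intros x p. pose proof (LHr_bnd rad Om H G x p). nra.
  - intros x y. pose proof (Hreg_bnd rad Om H G x y). nra.
  - apply (lip_conv rad); auto. apply (LHr_lip rad Om H G).
  - apply (lip_conv rad); auto. apply (Hreg_lip rad Om H G).
Qed.
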